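(* Let $\mathcal{G}=(\mathcal{V},\mathcal{E})$ be a directed graph with terminals $s,t$, $f:2^{\mathcal{E}}\to\mathbb{R}_+$ normalized, monotone nondecreasing and submodular, and $C^*$ an $(s,t)$-cut minimizing $f$. Consider the following randomized greedy path cover algorithm: start with $C=\emptyset$, $y=0\in\{0,1\}^{\mathcal{E}}$; while the shortest $(s,t)$-path $P_{\min}$ with respect to edge lengths $y$ (ties broken arbitrarily) has $\sum_{e\in P_{\min}}y(e)<1$: if $\min_{e\in P_{\min}}f(e\mid C)=0$, add all edges of $P_{\min}$ with zero marginal cost to $C$ (setting $y(e)=1$); otherwise choose $\beta\in(0,\min_{e\in P_{\min}}f(e\mid C)]$ and, for each $e\in P_{\min}$, with probability $\beta/f(e\mid C)$ add $e$ to $C$ and set $y(e)=1$. Finally prune $C$ to a minimal $(s,t)$-cut $\widehat C'\subseteq C$ and return it. Then $\mathbb{E}[f(\widehat C')]\le |P_{\max}|\,f(C^* )$, where $P_{\max}$ is a longest simple $(s,t)$-path in $\mathcal{G}$ and $|P_{\max}|$ is its number of edges.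
   Context: An $(s,t)$-cut is a set of edges whose removal disconnects all $s$-$t$ paths; it is minimal if no proper subset is a cut. $f(e\mid C)=f(C\cup\{e\})-f(C)$ is the marginal cost. The expectation is over the random sampling of edges. *)

(* Defs.v *)
From HB Require Import structures.
From mathcomp Require Import all_boot all_order all_algebra.
From mathcomp Require Import boolp reals.
Set Implicit Arguments. Unset Strict Implicit. Unset Printing Implicit Defensive.
Import Order.TTheory GRing.Theory Num.Theory.
Local Open Scope ring_scope.

Section GreedyPathCover.
Variables (V E : finType) (src dst : E -> V) (s t : V).

Fixpoint walk_from (u : V) (P : seq E) (w : V) : bool :=
  match P with
  | [::] => u == w
  | e :: P' => (src e == u) && walk_from (dst e) P' w
  end.

Definition st_path (P : seq E) : bool :=
  walk_from s P t && uniq (s :: map dst P).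

Definition is_cut (C : {set E}) : Prop :=
  forall P, st_path P -> has (fun e => e \in C) P.

Definition minimal_cut (C : {set E}) : Prop :=
  is_cut C /\ forall D : {set E}, D \proper C -> ~ is_cut D.

Definition longest_st_path (P : seq E) : Prop :=
  st_path P /\ forall Q, st_path Q -> (size Q <= size P)%N.

Variable R : realType.

(* edge lengths y = indicator of C *)
Definition ylen (C : {set E}) (P : seq E) : R :=
  \sum_(e <- P) (e \in C)%:R.

Definition shortest_st_path (C : {set E}) (P : seq E) : Prop :=
  st_path P /\ forall Q, st_path Q -> ylen C P <= ylen C Q.

Definition loop_cont (C : {set E}) : Prop :=
  exists P, shortest_st_path C P /\ ylen C P < 1.

Variable f : {set E} -> R.

Definition normalized : Prop := f set0 = 0.
Definition nonneg_fun : Prop := forall A, 0 <= f A.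
Definition monotone_fun : Prop := forall A B : {set E}, A \subset B -> f A <= f B.
Definition submodular : Prop :=
  forall A B : {set E}, f (A :|: B) + f (A :&: B) <= f A + f B.

Definition marg (C : {set E}) (e : E) : R := f (e |: C) - f C.

(* Adversarial/arbitrary choices, allowed to depend on the history of states
   (list of previous sets C, most recent first) and the current set C:
   - pc h C   : the shortest path chosen (tie breaking),
   - beta h C : the chosen beta,
   - prune h C: the minimal cut obtained by pruning. *)
Variables (pc : seq {set E} -> {set E} -> seq E)
          (beta : seq {set E} -> {set E} -> R)
          (prune : seq {set E} -> {set E} -> {set E}).

Definition valid_choices : Prop :=
  [/\ (forall h C, loop_cont C -> shortest_st_path C (pc h C)),
      (forall h C, loop_cont C -> all (fun e => 0 < marg C e) (pc h C) ->
          0 < beta h C /\ all (fun e => beta h C <= marg C e) (pc h C))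
    & (forall h C, ~ loop_cont C -> prune h C \subset C /\ minimal_cut (prune h C))].

(* probability that exactly the edges of S (a subset of the edges of P) are
   sampled, each e in P independently with probability beta / f(e|C) *)
Definition sample_prob (C : {set E}) (P : seq E) (b : R) (S : {set E}) : R :=
  \prod_(e <- P) (if e \in S then b / marg C e else 1 - b / marg C e).

(* Partial expectation of f(output) over the runs that terminate within n
   loop iterations, starting from history h and current set C. *)
Fixpoint part_exp (n : nat) (h : seq {set E}) (C : {set E}) : R :=
  if `[< loop_cont C >] then
    match n with
    | 0 => 0
    | n'.+1 =>
      let P := pc h C in
      if has (fun e => marg C e == 0) P then
        part_exp n' (C :: h) (C :|: [set e in P | marg C e == 0])
      else
        \sum_(S in powerset [set e in P])
           sample_prob C P (beta h C) S * part_exp n' (C :: h) (C :|: S)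
    end
  else f (prune h C).

End GreedyPathCover.

(* Main.v *)
Require Import Defs.
From HB Require Import structures.
From mathcomp Require Import all_boot all_order all_algebra.
From mathcomp Require Import boolp reals lra.
Import Order.TTheory GRing.Theory Num.Theory.
Local Open Scope ring_scope.

Lemma sum_pow_U1 (T : finType) (R : zmodType) (x : T) (A : {set T}) (H : {set T} -> R) :
  x \notin A ->
  \sum_(S in powerset (x |: A)) H S = \sum_(S in powerset A) (H S + H (x |: S)).
Proof.
move=> xA.
rewrite big_split /= (bigID (fun S : {set T} => x \in S)) /= addrC; congr (_ + _).
- apply: eq_bigl => S; rewrite !inE.
  apply/idP/idP.
  + case/andP => /subsetP sub xS; apply/subsetP => y yS.
    have := sub y yS; rewrite !inE; case/orP => // /eqP yx.
    by rewrite -yx yS in xS.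
  + move=> /subsetP sub; apply/andP; split.
    * by apply/subsetP => y yS; rewrite !inE (sub y yS) orbT.
    * by apply/negP => xS; rewrite (sub x xS) in xA.
- rewrite (reindex_onto (fun S => x |: S) (fun S => S :\ x)) /=; last first.
    by move=> S /andP[_ xS]; rewrite setD1K.
  apply: eq_bigl => S; rewrite !inE eqxx /= andbT.
  apply/idP/idP.
  + case/andP => /subsetP sub /eqP eqS; apply/subsetP => y yS.
    have xS : x \notin S by rewrite -eqS !inE eqxx.
    have := sub y; rewrite !inE yS orbT => /(_ isT) /orP[/eqP yx|//].
    by rewrite -yx yS in xS.
  + move=> sub.
    have xS : x \notin S by apply: contra xA => xS; apply: (subsetP sub).
    by rewrite setU1K // eqxx andbT setUS.
Qed.

Lemma sum_prod_pow (T : finType) (R : comRingType) (a b : T -> R) (P : seq T) :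
  uniq P ->
  \sum_(S in powerset [set e in P]) \prod_(e <- P) (if e \in S then a e else b e)
  = \prod_(e <- P) (a e + b e).
Proof.
elim: P => [|x P IH] /=.
- move=> _; rewrite big_nil.
  have -> : [set e in [::]] = set0 :> {set T} by apply/setP => e; rewrite !inE.
  by rewrite powerset0 big_set1 big_nil.
- case/andP => xP uP.
  have -> : [set e in x :: P] = x |: [set e in P] by apply/setP => e; rewrite !inE.
  rewrite sum_pow_U1 ?inE // big_cons -IH // big_distrr /=.
  apply: eq_bigr => S; rewrite inE => sub.
  have xS : x \notin S.
    by apply: contra xP => xS; have := subsetP sub x xS; rewrite inE.
  have E : \prod_(e <- P) (if e \in x |: S then a e else b e) =
           \prod_(e <- P) (if e \in S then a e else b e).
    apply: eq_big_seq => e eP; rewrite !inE.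
    have -> : (e == x) = false by apply/negbTE; apply: contra xP => /eqP <-.
    by [].
  by rewrite !big_cons (negbTE xS) setU11 E mulrDl addrC.
Qed.

Section Sub.
Variables (E : finType) (R : realType) (f : {set E} -> R).
Hypotheses (fmono : monotone_fun f) (fsub : submodular f).

Lemma DR (C D : {set E}) x : C \subset D -> f (x |: D) + f C <= f (x |: C) + f D.
Proof.
move=> CD.
have h := fsub (x |: C) D.
have e1 : (x |: C) :|: D = x |: D.
  by rewrite -setUA (setUidPr CD).
have h2 : f C <= f ((x |: C) :&: D).
  apply: fmono; rewrite subsetI CD andbT; exact: subsetUr.
rewrite e1 in h; apply: le_trans h; by rewrite lerD2l.
Qed.

Lemma marg_ge0 C e : 0 <= marg f C e.
Proof. by rewrite /marg subr_ge0; apply: fmono; exact: subsetUr. Qed.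

Lemma S1 (C S : {set E}) (l : seq E) :
  f (C :|: (S :&: [set e in l])) <= f C + \sum_(e <- l) (e \in S)%:R * marg f C e.
Proof.
elim: l => [|x l IH].
  have -> : S :&: [set e in [::]] = set0 by apply/setP => e; rewrite !inE andbF.
  by rewrite setU0 big_nil addr0.
rewrite big_cons.
case xS : (x \in S); last first.
  have -> : S :&: [set e in x :: l] = S :&: [set e in l].
    apply/setP => e; rewrite !inE; case: (eqVneq e x) => [->|] //=; by rewrite xS.
  by rewrite mul0r add0r.
have -> : C :|: (S :&: [set e in x :: l]) = x |: (C :|: (S :&: [set e in l])).
  apply/setP => e; rewrite !inE; case: (eqVneq e x) => [->|] //=; by rewrite xS orbT.
have h := @DR C (C :|: (S :&: [set e in l])) x (subsetUl _ _).
rewrite mul1r /marg.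
move: h IH; set a := f _; set b := f _; set c := f _; set d := \sum_(_ <- _) _.
lra.
Qed.
End Sub.

Section Prob.
Variables (E : finType) (R : realType) (f : {set E} -> R).
Variables (C : {set E}) (P : seq E) (b : R).
Hypotheses (uP : uniq P) (mpos : forall {e}, e \in P -> 0 < marg f C e)
  (b0 : 0 < b) (ble : forall {e}, e \in P -> b <= marg f C e).

Let q e := b / marg f C e.
Let p S := sample_prob f C P b S.

Lemma q01 e : e \in P -> 0 <= q e /\ q e <= 1.
Proof.
move=> eP; have m0 := mpos eP; split.
  by rewrite /q divr_ge0 // ltW.
by rewrite /q ler_pdivrMr // mul1r ble.
Qed.

Lemma p_ge0 S : 0 <= p S.
Proof.
rewrite /p /sample_prob big_seq; apply: prodr_ge0 => e eP.
have [h1 h2] := q01 e eP; case: ifP => _ //; by rewrite subr_ge0.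
Qed.

Lemma E1 : \sum_(S in powerset [set e in P]) p S = 1.
Proof.
rewrite /p /sample_prob (sum_prod_pow _ _ (fun e => b / marg f C e) (fun e => 1 - b / marg f C e) _ uP).
by rewrite big1 // => e _; rewrite addrC subrK.
Qed.

Lemma E2 x : x \in P -> \sum_(S in powerset [set e in P]) p S * (x \in S)%:R = q x.
Proof.
move=> xP.
rewrite (eq_bigr (fun S : {set E} => \prod_(e <- P) (if e \in S then b / marg f C e
                       else (if e == x then 0 else 1 - b / marg f C e)))); last first.
  move=> S _; rewrite /p /sample_prob; case xS : (x \in S).
    rewrite mulr1; apply: eq_bigr => e _; case: ifP => // eS.
    by case: eqP => // ex; rewrite ex xS in eS.
  by rewrite mulr0 (big_rem x xP) /= xS eqxx mul0r.
rewrite (sum_prod_pow _ _ _ _ _ uP) (big_rem x xP) /= eqxx addr0.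
rewrite big_seq big1 ?mulr1 // => e.
rewrite (mem_rem_uniq x uP) !inE => /andP[/negbTE -> _].
by rewrite addrC subrK.
Qed.

Lemma Exp (c k : R) (w : E -> R) x : x \in P ->
  \sum_(S in powerset [set e in P]) p S * (c + \sum_(e <- P) (e \in S)%:R * w e + k * (x \in S)%:R)
  = c + \sum_(e <- P) q e * w e + k * q x.
Proof.
move=> xP.
rewrite (eq_bigr (fun S : {set E} => c * p S + \sum_(e <- P) (p S * (e \in S)%:R) * w e
                           + k * (p S * (x \in S)%:R))); last first.
  move=> S _; rewrite !mulrDr big_distrr /= (mulrC (p S) c) mulrCA; congr (_ + _ + _).
  by apply: eq_bigr => e _; rewrite mulrA.
rewrite !big_split /= -!big_distrr /= E1 E2 // mulr1; congr (_ + _ + _).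
rewrite exchange_big /= big_seq [RHS]big_seq; apply: eq_bigr => e eP.
by rewrite -big_distrl /= E2.
Qed.

End Prob.

Lemma sum_cst (E : eqType) (R : nmodType) (r : seq E) (b : R) : \sum_(e <- r) b = b *+ size r.
Proof. by elim: r => [|x r IH]; rewrite ?big_nil ?big_cons ?IH ?mulrS. Qed.

Section Main.
Variables (V E : finType) (src dst : E -> V) (s t : V) (R : realType)
  (f : {set E} -> R)
  (pc : seq {set E} -> {set E} -> seq E)
  (beta : seq {set E} -> {set E} -> R)
  (prune : seq {set E} -> {set E} -> {set E})
  (Cstar : {set E}) (Pmax : seq E).
Hypotheses (f0 : nonneg_fun f) (fmono : monotone_fun f) (fsub : submodular f)
  (Hcut : is_cut src dst s t Cstar) (Hlong : longest_st_path src dst s t Pmax)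
  (Hval : valid_choices src dst s t f pc beta prune).

Let L : R := (size Pmax)%:R.

Lemma L0 : 0 <= L. Proof. by rewrite /L ler0n. Qed.

Lemma inv n : forall h C,
  part_exp src dst s t f pc beta prune n h C <= f C + L * (f Cstar - f (Cstar :&: C)).
Proof.
have [Hpc Hbeta Hprune] := Hval.
have gap C : 0 <= L * (f Cstar - f (Cstar :&: C)).
  by apply: mulr_ge0; [exact: L0 | rewrite subr_ge0; apply: fmono; exact: subsetIl].
elim: n => [|n IH] h C /=.
  case: asboolP => Hl.
    by apply: addr_ge0 => //; exact: f0.
  have [sub _] := Hprune h C Hl.
  have := fmono _ _ sub; have := gap C; lra.
case: asboolP => Hl; last first.
  have [sub _] := Hprune h C Hl.
  have := fmono _ _ sub; have := gap C; lra.
have [Pst Pshort] := Hpc h C Hl.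
set P := pc h C.
have uP : uniq P.
  by move: Pst => /andP[_ /= /andP[_ /map_uniq]].
have sizeP : (size P <= size Pmax)%N by apply: Hlong.2.
case: ifP => Hz.
  apply: le_trans (IH _ _) _.
  set Z := [set e in P | marg f C e == 0].
  have A1 : f (C :|: Z) <= f C.
    have -> : Z = [set e | marg f C e == 0] :&: [set e in P].
      by apply/setP => e; rewrite !inE andbC.
    apply: le_trans (@S1 _ _ _ fmono fsub _ _ P) _.
    rewrite big1 ?addr0 // => e _; rewrite inE.
    by case: eqP => [->|_]; rewrite ?mulr0 ?mul0r.
  have A2 : f (Cstar :&: C) <= f (Cstar :&: (C :|: Z)).
    by apply: fmono; apply: setIS; exact: subsetUl.
  have A3 : L * (f Cstar - f (Cstar :&: (C :|: Z))) <= L * (f Cstar - f (Cstar :&: C)).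
    by apply: ler_wpM2l; [exact: L0 | lra].
  lra.
have mpos : forall e, e \in P -> 0 < marg f C e.
  move=> e eP; rewrite lt_def (@marg_ge0 _ _ _ fmono) andbT.
  by apply/negP => /eqP e0; move/negbT: Hz => /hasPn /(_ e eP); rewrite e0 eqxx.
have Hall : all (fun e => 0 < marg f C e) P by apply/allP.
have [b0 /allP ble] := Hbeta h C Hl Hall.
have [es esP esC] := hasP (Hcut _ Pst).
set b := beta h C.
set c := f C + L * (f Cstar - f (Cstar :&: C)).
set k := - (L * marg f C es).
apply: (@le_trans _ _ (\sum_(S in powerset [set e in P])
   sample_prob f C P b S * (c + \sum_(e <- P) (e \in S)%:R * marg f C e + k * (es \in S)%:R))).
  apply: ler_sum => S SA; apply: ler_wpM2l; first exact: (@p_ge0 _ _ _ _ _ _ mpos b0 ble).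
  apply: le_trans (IH _ _) _.
  have SsubA : S \subset [set e in P] by rewrite powersetE in SA.
  have A1 : f (C :|: S) <= f C + \sum_(e <- P) (e \in S)%:R * marg f C e.
    have := @S1 _ _ _ fmono fsub C S P; by rewrite (setIidPl SsubA).
  have A2 : f (Cstar :&: C) + (es \in S)%:R * marg f C es <= f (Cstar :&: (C :|: S)).
    case esS : (es \in S); last first.
      by rewrite mul0r addr0; apply: fmono; apply: setIS; exact: subsetUl.
    rewrite mul1r.
    have h1 := @DR _ _ _ fmono fsub _ _ es (subsetIr Cstar C).
    have h2 : f (es |: (Cstar :&: C)) <= f (Cstar :&: (C :|: S)).
      apply: fmono; apply/subsetP => e; rewrite !inE.
      case/orP => [/eqP -> | /andP[-> ->]] //; by rewrite esC esS orbT.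
    move: h1 h2; rewrite /marg; lra.
  have A3 : L * (f Cstar - f (Cstar :&: (C :|: S))) <=
            L * (f Cstar - f (Cstar :&: C) - (es \in S)%:R * marg f C es).
    by apply: ler_wpM2l; [exact: L0 | lra].
  have eqk : L * ((es \in S)%:R * marg f C es) = - k * (es \in S)%:R.
    by rewrite /k opprK mulrCA mulrC.
  move: A1 A3 eqk; rewrite /c /k; lra.
have HE := @Exp _ _ _ _ _ _ uP c k (marg f C) es esP; rewrite /= in HE; rewrite HE.
have -> : \sum_(e <- P) b / marg f C e * marg f C e = b *+ size P.
  rewrite -sum_cst; apply: eq_big_seq => e eP; rewrite divfK //.
  exact: lt0r_neq0 (mpos e eP).
rewrite /k mulNr -mulrA [marg f C es * _]mulrC divfK ?(lt0r_neq0 (mpos es esP)) //.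
have : b *+ size P <= L * b.
  rewrite -mulr_natl; apply: ler_wpM2r; [exact: ltW | by rewrite /L ler_nat].
lra.
Qed.

End Main.
Theorem lemma7 (V E : finType) (src dst : E -> V) (s t : V) (R : realType)
  (f : {set E} -> R)
  (pc : seq {set E} -> {set E} -> seq E)
  (beta : seq {set E} -> {set E} -> R)
  (prune : seq {set E} -> {set E} -> {set E})
  (Cstar : {set E}) (Pmax : seq E) :
  injective (fun e => (src e, dst e)) ->
  normalized f -> nonneg_fun f -> monotone_fun f -> submodular f ->
  is_cut src dst s t Cstar ->
  (forall C, is_cut src dst s t C -> f Cstar <= f C) ->
  longest_st_path src dst s t Pmax ->
  valid_choices src dst s t f pc beta prune ->
  forall n : nat,
    part_exp src dst s t f pc beta prune n [::] set0 <= (size Pmax)%:R * f Cstar.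
Proof.
move=> _ fn f0 fm fs Hc _ Hl Hv n.
apply: le_trans (inv _ _ _ _ _ _ _ _ _ _ _ _ _ f0 fm fs Hc Hl Hv n [::] set0) _.
rewrite setI0; rewrite /normalized in fn; rewrite fn.
lra.
Qed.
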